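(* Let $n\in\mathbb{N}$ and $p^*\in[1,\infty]$. If $\mathcal{P}=\{x_1,\dots,x_n\}$ is a collection of $n$ points in $[0,1]$ (repetitions allowed) whose $L_{p^*}$-discrepancy is minimal among all collections of $n$ points in $[0,1]$, then for each $j=1,\dots,n$ the interval $[\frac{j-1}{n},\frac jn)$ contains exactly one point of $\mathcal{P}$.
   Context: For $\mathcal{P}=\{x_1,\dots,x_n\}\subseteq[0,1]$, the local discrepancy is $\Delta_{\mathcal{P}}(t)=\frac1n\#\{j:x_j\in[0,t)\}-t$ for $t\in[0,1]$, and $L_{p^*}(\mathcal{P})=\|\Delta_{\mathcal{P}}\|_{L_{p^*}([0,1])}$. *)

(* Defs.v *)
From Stdlib Require Import Reals Lra List Classical ClassicalEpsilon.
Open Scope R_scope.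

Definition count_in (a b : R) (P : list R) : nat :=
  length (filter (fun x => if Rle_dec a x then
                             (if Rlt_dec x b then true else false)
                           else false) P).

Definition local_disc (P : list R) (t : R) : R :=
  INR (count_in 0 t P) / INR (length P) - t.

(* Riemann integral on [a,b], defined (classically) as RiemannInt whenever
   f is Riemann integrable, 0 otherwise (never happens for the integrands used). *)
Definition RInt (f : R -> R) (a b : R) : R :=
  match excluded_middle_informative (exists _ : Riemann_integrable f a b, True) with
  | left H => RiemannInt (proj1_sig (constructive_indefinite_description _ H))
  | right _ => 0
  end.

Definition rpow (x p : R) : R := if Req_EM_T x 0 then 0 else Rpower x p.

(* Supremum of a set of reals (chosen least upper bound; 0 if none exists). *)
Definition Rsup (E : R -> Prop) : R :=
  epsilon (inhabits 0) (fun s => is_lub E s).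

(* Exponent p* in [1, infinity]: Some p = finite p, None = infinity. *)
Definition valid_exp (p : option R) : Prop :=
  match p with Some q => 1 <= q | None => True end.

(* L_{p*} norm on [0,1]. For p* = infinity we use the sup of |f| on [0,1];
   for the left-continuous local discrepancy this coincides with the
   essential supremum. *)
Definition Lp_norm01 (p : option R) (f : R -> R) : R :=
  match p with
  | Some q => rpow (RInt (fun t => rpow (Rabs (f t)) q) 0 1) (/ q)
  | None => Rsup (fun y => exists t, 0 <= t <= 1 /\ y = Rabs (f t))
  end.

Definition Lp_disc (p : option R) (P : list R) : R :=
  Lp_norm01 p (local_disc P).

Definition in_unit (P : list R) : Prop := forall x, In x P -> 0 <= x <= 1.

(* Main.v *)
Require Import Defs.
From Stdlib Require Import Reals Lra Lia List Classical ClassicalEpsilon.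
Open Scope R_scope.

Lemma rpow_nonneg x q : 0 <= rpow x q.
Proof. unfold rpow; destruct Req_EM_T; [lra|]. unfold Rpower; left; apply exp_pos. Qed.

Lemma rpow_pos x q : 0 < x -> 0 < rpow x q.
Proof. intros H; unfold rpow; destruct Req_EM_T; [lra|]. unfold Rpower; apply exp_pos. Qed.

Lemma rpow_lt x y q : 0 < q -> 0 <= x < y -> rpow x q < rpow y q.
Proof.
  intros Hq [H1 H2]. unfold rpow at 2; destruct (Req_EM_T y 0); [lra|].
  unfold rpow; destruct (Req_EM_T x 0).
  - unfold Rpower; apply exp_pos.
  - apply Rlt_Rpower_l; lra.
Qed.

Lemma rpow_le x y q : 0 < q -> 0 <= x <= y -> rpow x q <= rpow y q.
Proof.
  intros Hq [H1 H2]. destruct (Req_dec x y) as [->|]; [lra|]. left; apply rpow_lt; lra.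
Qed.

Lemma rpow_small z q : 1 <= q -> 0 <= z <= 1 -> rpow z q <= z.
Proof.
  intros Hq Hz. unfold rpow; destruct Req_EM_T; [lra|].
  unfold Rpower. assert (ln z <= 0).
  { destruct (Req_dec z 1) as [->|]; [rewrite ln_1; lra|].
    left; rewrite <- ln_1; apply ln_increasing; lra. }
  rewrite <- (exp_ln z) at 2 by lra.
  destruct (Req_dec (q * ln z) (ln z)) as [->|]; [lra|].
  left; apply exp_increasing; nra.
Qed.

Lemma rpow_abs_cont q : 1 <= q -> forall y0, continuity_pt (fun y => rpow (Rabs y) q) y0.
Proof.
  intros Hq y0. destruct (Req_dec y0 0) as [->|Hy0].
  - intros eps Heps. exists (Rmin eps 1). split; [apply Rmin_pos; lra|].
    intros y [_ Hy]. simpl in *. unfold R_dist in *. rewrite Rminus_0_r in Hy.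
    rewrite Rabs_R0. unfold rpow at 2. destruct (Req_EM_T 0 0); [|lra].
    rewrite Rminus_0_r, Rabs_right by (apply Rle_ge, rpow_nonneg).
    assert (Rabs y < eps /\ Rabs y < 1) by (split; eapply Rlt_le_trans; eauto; [apply Rmin_l|apply Rmin_r]).
    eapply Rle_lt_trans; [apply rpow_small|]; try split; try apply Rabs_pos; lra.
  - assert (Hc : continuity_pt (fun y => Rpower (Rabs y) q) y0).
    { apply (continuity_pt_comp Rabs (fun x => Rpower x q)).
      apply Rcontinuity_abs. apply derivable_continuous_pt.
      exists (q * Rpower (Rabs y0) (q - 1)). apply derivable_pt_lim_power.
      apply Rabs_pos_lt; auto. }
    intros eps Heps. destruct (Hc eps Heps) as [a [Ha H]].
    exists (Rmin a (Rabs y0)). split; [apply Rmin_pos; auto; apply Rabs_pos_lt; auto|].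
    intros y [Hd Hy]. assert (Rabs y <> 0).
    { intro E. destruct (Req_dec y 0) as [->|Hn]; [|apply (Rabs_no_R0 y Hn E)]. simpl in Hy. unfold R_dist in Hy.
      rewrite Rminus_0_l, Rabs_Ropp in Hy. pose proof (Rmin_r a (Rabs y0)). lra. }
    unfold rpow. destruct Req_EM_T; [contradiction|]. destruct Req_EM_T.
    { exfalso; apply (Rabs_no_R0 y0 Hy0 e). }
    apply H. split; auto. eapply Rlt_le_trans; eauto; apply Rmin_l.
Qed.

Lemma count_cons a b x P : count_in a b (x :: P) =
  ((if Rle_dec a x then if Rlt_dec x b then 1 else 0 else 0) + count_in a b P)%nat.
Proof. unfold count_in; simpl; destruct (Rle_dec a x); [destruct (Rlt_dec x b)|]; reflexivity. Qed.

Lemma count_le_length a b P : (count_in a b P <= length P)%nat.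
Proof. induction P as [|x P IH]; [unfold count_in; simpl; lia|]. rewrite count_cons; simpl length.
  destruct (Rle_dec a x); destruct (Rlt_dec x b); simpl; lia. Qed.

Lemma count_mono a t t' P : t <= t' -> (count_in a t P <= count_in a t' P)%nat.
Proof. intros H. induction P as [|x P IH]; [unfold count_in; simpl; lia|]. rewrite !count_cons.
  destruct Rle_dec; [|lia]. destruct (Rlt_dec x t); destruct (Rlt_dec x t'); simpl; try lia. lra. Qed.

Lemma count_split a b c P : a <= b <= c ->
  count_in a c P = (count_in a b P + count_in b c P)%nat.
Proof. intros H. induction P as [|x P IH]; [reflexivity|]. rewrite !count_cons.
  destruct (Rle_dec a x); destruct (Rlt_dec x c); destruct (Rlt_dec x b); destruct (Rle_dec b x);
  simpl; try lia; lra. Qed.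

Lemma count_app a b P Q : count_in a b (P ++ Q) = (count_in a b P + count_in a b Q)%nat.
Proof. induction P as [|x P IH]; [reflexivity|]. simpl app. rewrite !count_cons, IH. lia. Qed.

From Coquelicot Require Import Coquelicot.

Lemma integ_gen : forall (P : list R) (F : nat -> R -> R),
  (forall k t, continuous (F k) t) ->
  forall a b, a <= b -> ex_RInt (fun t => F (count_in 0 t P) t) a b.
Proof.
  induction P as [|x P IH]; intros F HF a b Hab.
  - apply (@ex_RInt_continuous R_CompleteNormedModule). intros z _. unfold count_in; simpl. apply HF.
  - assert (Hlow : forall a b, a <= b -> b <= x -> ex_RInt (fun t => F (count_in 0 t (x :: P)) t) a b).
    { intros a' b' H1 H2. apply (ex_RInt_ext (fun t => F (count_in 0 t P) t)); [|apply IH; auto].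
      intros t Ht. rewrite Rmin_left, Rmax_right in Ht by lra. rewrite count_cons.
      destruct (Rle_dec 0 x); [destruct (Rlt_dec x t)|]; simpl; auto; lra. }
    assert (Hhigh : forall a b, a <= b -> x <= a -> ex_RInt (fun t => F (count_in 0 t (x :: P)) t) a b).
    { intros a' b' H1 H2. destruct (Rle_dec 0 x) as [Hx|Hx].
      - apply (ex_RInt_ext (fun t => F (S (count_in 0 t P)) t)); [|apply (IH (fun k => F (S k))); auto].
        intros t Ht. rewrite Rmin_left, Rmax_right in Ht by lra. rewrite count_cons.
        destruct (Rle_dec 0 x); [destruct (Rlt_dec x t)|]; simpl; auto; lra.
      - apply (ex_RInt_ext (fun t => F (count_in 0 t P) t)); [|apply IH; auto].
        intros t Ht. rewrite count_cons.
        destruct (Rle_dec 0 x); [lra|]; simpl; auto. }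
    destruct (Rle_dec b x); [apply Hlow; auto|].
    destruct (Rle_dec x a); [apply Hhigh; auto|].
    apply (ex_RInt_Chasles _ a x b); [apply Hlow|apply Hhigh]; lra.
Qed.

Definition gfun (q : R) (P : list R) (t : R) := rpow (Rabs (local_disc P t)) q.

Lemma integ_g q P a b : 1 <= q -> a <= b -> ex_RInt (gfun q P) a b.
Proof.
  intros Hq Hab.
  apply (ex_RInt_ext (fun t => (fun k t => rpow (Rabs (INR k / INR (length P) - t)) q) (count_in 0 t P) t)).
  { intros; reflexivity. }
  apply (integ_gen P (fun k t => rpow (Rabs (INR k / INR (length P) - t)) q)); auto. intros k t.
  apply continuity_pt_filterlim.
  apply (continuity_pt_comp (fun t => INR k / INR (length P) - t) (fun y => rpow (Rabs y) q)).
  - apply continuity_pt_minus; [apply continuity_pt_const; intros ? ?; reflexivity|apply continuity_pt_id].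
  - apply rpow_abs_cont; auto.
Qed.

Definition fpt (n i : nat) : R := (2 * INR i + 1) / (2 * INR n).
Definition Q0 (n : nat) : list R := map (fpt n) (seq 0 n).

Lemma fpt_mono n i j : (1 <= n)%nat -> (i <= j)%nat -> fpt n i <= fpt n j.
Proof.
  intros Hn Hij. unfold fpt. apply le_INR in Hn, Hij. simpl in Hn.
  unfold Rdiv. apply Rmult_le_compat_r; [left; apply Rinv_0_lt_compat; lra|lra].
Qed.

Lemma fpt_nonneg n i : 0 <= fpt n i.
Proof. unfold fpt. pose proof (pos_INR i); pose proof (pos_INR n).
  unfold Rdiv. apply Rmult_le_pos; [lra|]. destruct (Req_dec (2 * INR n) 0) as [->|].
  rewrite Rinv_0; lra. left; apply Rinv_0_lt_compat; lra. Qed.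

Lemma Q0_count_gen n t k : (1 <= n)%nat ->
  let m := count_in 0 t (map (fpt n) (seq 0 k)) in
  (m <= k)%nat /\ (m = 0%nat \/ fpt n (m - 1) < t) /\ (m = k \/ t <= fpt n m).
Proof.
  intros Hn. induction k as [|k IH]; cbv zeta in *.
  - unfold count_in; simpl. lia.
  - rewrite seq_S, map_app, count_app. simpl map.
    destruct IH as [H1 [H2 H3]].
    rewrite count_cons. change (count_in 0 t nil) with 0%nat.
    set (m := count_in 0 t (map (fpt n) (seq 0 k))) in *.
    destruct (Rle_dec 0 (fpt n k)) as [_|Hc]; [|exfalso; apply Hc, fpt_nonneg].
    destruct (Rlt_dec (fpt n k) t) as [Hlt|Hge].
    + destruct H3 as [H3|H3].
      * rewrite H3. split; [lia|]. split; [right|left; lia]. replace (k + (1 + 0) - 1)%nat with k by lia; auto.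
      * exfalso. assert (fpt n m <= fpt n k) by (apply fpt_mono; lia). lra.
    + replace (m + (0 + 0))%nat with m by lia. split; [lia|]. split; auto. right.
      destruct H3 as [H3|H3]; [rewrite H3; lra|auto].
Qed.

Lemma real_key N M C u : 1 <= N -> 0 <= u <= N -> 0 <= M <= N -> 0 <= C ->
  (C = M \/ M + 1 <= C \/ C <= M - 1) -> (M = 0 \/ 2 * M - 1 < 2 * u) ->
  (M = N \/ 2 * u <= 2 * M + 1) ->
  Rabs (M - u) <= Rabs (C - u) /\ Rabs (M - u) <= 1 / 2.
Proof.
  intros HN Hu HM HC HCM H1 H2.
  destruct HCM as [->|[HCM|HCM]]; [split; [lra|]|split|split];
  destruct H1 as [H1|H1]; destruct H2 as [H2|H2];
  unfold Rabs; repeat destruct Rcase_abs; lra.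
Qed.

Lemma Q0_length n : length (Q0 n) = n.
Proof. unfold Q0. rewrite length_map, length_seq. reflexivity. Qed.

Lemma Q0_unit n : in_unit (Q0 n).
Proof.
  intros x Hx. unfold Q0 in Hx. apply in_map_iff in Hx as [i [<- Hi]].
  apply in_seq in Hi. split; [apply fpt_nonneg|].
  unfold fpt. assert (Hi' : (i + 1 <= n)%nat) by lia. apply le_INR in Hi'.
  rewrite plus_INR in Hi'. simpl in Hi'. pose proof (pos_INR i).
  apply (Rmult_le_reg_r (2 * INR n)); [lra|]. unfold Rdiv. rewrite Rmult_assoc, Rinv_l by lra. lra.
Qed.

Lemma Q0_disc n t c : (1 <= n)%nat -> 0 <= t <= 1 ->
  Rabs (local_disc (Q0 n) t) <= Rabs (INR c / INR n - t) /\
  Rabs (local_disc (Q0 n) t) <= / (2 * INR n).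
Proof.
  intros Hn Ht. unfold local_disc. rewrite Q0_length.
  destruct (Q0_count_gen n t n Hn) as [H1 [H2 H3]]. unfold Q0.
  set (m := count_in 0 t (map (fpt n) (seq 0 n))) in *.
  assert (HN : 1 <= INR n) by (apply le_INR in Hn; simpl in Hn; lra).
  assert (Hm : INR m <= INR n) by (apply le_INR; auto).
  pose proof (pos_INR m). pose proof (pos_INR c).
  assert (K := real_key (INR n) (INR m) (INR c) (INR n * t)).
  destruct K as [K1 K2].
  - lra.
  - nra.
  - lra.
  - lra.
  - destruct (Nat.lt_trichotomy c m) as [Hc|[Hc|Hc]].
    + right; right. assert (Hc' : (S c <= m)%nat) by lia. apply le_INR in Hc'. rewrite S_INR in Hc'. lra.
    + left; subst; auto.
    + right; left. assert (Hc' : (S m <= c)%nat) by lia. apply le_INR in Hc'. rewrite S_INR in Hc'. lra.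
  - destruct H2 as [H2|H2]; [left; rewrite H2; reflexivity|].
    destruct (Nat.eq_dec m 0) as [E|E]; [left; rewrite E; reflexivity|right].
    unfold fpt in H2. rewrite minus_INR in H2 by lia. simpl in H2.
    apply (Rmult_lt_compat_r (2 * INR n)) in H2; [|lra].
    unfold Rdiv in H2. rewrite Rmult_assoc, Rinv_l in H2 by lra. lra.
  - destruct H3 as [H3|H3]; [left; rewrite H3; reflexivity|right].
    unfold fpt in H3.
    apply (Rmult_le_compat_r (2 * INR n)) in H3; [|lra].
    unfold Rdiv in H3. rewrite Rmult_assoc, Rinv_l in H3 by lra. lra.
  - assert (E : forall X, X / INR n - t = (X - INR n * t) * / INR n) by (intros; field; lra).
    rewrite !E, !Rabs_mult, Rabs_inv, (Rabs_right (INR n)) by lra.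
    assert (0 < / INR n) by (apply Rinv_0_lt_compat; lra).
    split; [apply Rmult_le_compat_r; lra|].
    rewrite Rinv_mult. apply Rmult_le_compat_r; lra.
Qed.

Lemma RInt_eq f : ex_RInt f 0 1 -> Defs.RInt f 0 1 = RInt f 0 1.
Proof.
  intros H. unfold Defs.RInt. destruct excluded_middle_informative as [H'|H'].
  - rewrite (RInt_Reals f 0 1 (proj1_sig (constructive_indefinite_description _ H'))). reflexivity.
  - exfalso; apply H'. exists (ex_RInt_Reals_0 _ _ _ H); auto.
Qed.

Lemma Rsup_lub E : bound E -> (exists x, E x) -> is_lub E (Rsup E).
Proof.
  intros Hb He. unfold Rsup. apply epsilon_spec.
  destruct (completeness E Hb He) as [m Hm]. exists m; auto.
Qed.

Lemma RInt_const' c a b : RInt (fun _ => c) a b = (b - a) * c.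
Proof. rewrite RInt_const. reflexivity. Qed.

Lemma contra n p P a b : (1 <= n)%nat -> valid_exp p -> length P = n -> 0 <= a < b /\ b <= 1 ->
  (forall t, a <= t <= b -> 3 / (4 * INR n) <= Rabs (local_disc P t) /\
                          Rabs (local_disc (Q0 n) t) <= 1 / (4 * INR n)) ->
  Lp_disc p (Q0 n) < Lp_disc p P.
Proof.
  intros Hn Hp Hl Hab Hint.
  assert (HN : 1 <= INR n) by (apply le_INR in Hn; simpl in Hn; lra).
  assert (Hdom : forall t, 0 <= t <= 1 -> Rabs (local_disc (Q0 n) t) <= Rabs (local_disc P t)).
  { intros t Ht. destruct (Q0_disc n t (count_in 0 t P) Hn Ht) as [H _].
    unfold local_disc at 2. rewrite Hl. exact H. }
  destruct p as [q|].
  - simpl in Hp. unfold Lp_disc, Lp_norm01.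
    change (fun t => rpow (Rabs (local_disc (Q0 n) t)) q) with (gfun q (Q0 n)).
    change (fun t => rpow (Rabs (local_disc P t)) q) with (gfun q P).
    rewrite !RInt_eq by (apply integ_g; lra).
    assert (HI : forall X x y, x <= y -> ex_RInt (gfun q X) x y) by (intros; apply integ_g; lra).
    apply rpow_lt; [apply Rinv_0_lt_compat; lra|]. split.
    + apply RInt_ge_0; [lra|apply HI; lra|]. intros; apply rpow_nonneg.
    + assert (HC : forall X, RInt (gfun q X) 0 1 = RInt (gfun q X) 0 a + RInt (gfun q X) a b + RInt (gfun q X) b 1).
      { intros X. rewrite <- (RInt_Chasles (gfun q X) 0 b 1) by (apply HI; lra).
        rewrite <- (RInt_Chasles (gfun q X) 0 a b) by (apply HI; lra). reflexivity. }
      rewrite !HC.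
      assert (Hle : forall x y, 0 <= x -> x <= y -> y <= 1 -> RInt (gfun q (Q0 n)) x y <= RInt (gfun q P) x y).
      { intros x y H1 H2 H3. apply RInt_le; auto; try apply HI; auto.
        intros t Ht. unfold gfun. apply rpow_le; [lra|]. split; [apply Rabs_pos|]. apply Hdom; lra. }
      assert (Hmid : RInt (gfun q (Q0 n)) a b < RInt (gfun q P) a b).
      { apply Rle_lt_trans with (RInt (fun _ => rpow (1 / (4 * INR n)) q) a b).
        { apply RInt_le; [lra|apply HI; lra|apply ex_RInt_const|].
          intros t Ht. unfold gfun. apply rpow_le; [lra|]. split; [apply Rabs_pos|]. apply Hint; lra. }
        apply Rlt_le_trans with (RInt (fun _ => rpow (3 / (4 * INR n)) q) a b).
        { rewrite !RInt_const'. apply Rmult_lt_compat_l; [lra|]. apply rpow_lt; [lra|].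
          assert (0 < / (4 * INR n)) by (apply Rinv_0_lt_compat; lra). unfold Rdiv. lra. }
        apply RInt_le; [lra|apply ex_RInt_const|apply HI; lra|].
        intros t Ht. unfold gfun. apply rpow_le; [lra|]. split.
        - apply Rlt_le, Rmult_lt_0_compat; [lra|apply Rinv_0_lt_compat; lra].
        - apply Hint; lra. }
      pose proof (Hle 0 a ltac:(lra) ltac:(lra) ltac:(lra)).
      pose proof (Hle b 1 ltac:(lra) ltac:(lra) ltac:(lra)). lra.
  - unfold Lp_disc, Lp_norm01.
    set (EQ := fun y => exists t, 0 <= t <= 1 /\ y = Rabs (local_disc (Q0 n) t)).
    set (EP := fun y => exists t, 0 <= t <= 1 /\ y = Rabs (local_disc P t)).
    assert (HQb : forall y, EQ y -> y <= / (2 * INR n)).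
    { intros y [t [Ht ->]]. apply (Q0_disc n t 0 Hn Ht). }
    assert (HPb : forall y, EP y -> y <= 1).
    { intros y [t [Ht ->]]. unfold local_disc. rewrite Hl.
      pose proof (count_le_length 0 t P) as Hc. rewrite Hl in Hc. apply le_INR in Hc.
      pose proof (pos_INR (count_in 0 t P)).
      assert (0 <= INR (count_in 0 t P) / INR n <= 1).
      { split; [apply Rmult_le_pos; [lra|left; apply Rinv_0_lt_compat; lra]|].
        apply (Rmult_le_reg_r (INR n)); [lra|]. unfold Rdiv. rewrite Rmult_assoc, Rinv_l by lra. lra. }
      unfold Rabs; destruct Rcase_abs; lra. }
    destruct (Rsup_lub EQ) as [_ HQ].
    { exists (/ (2 * INR n)); intros y Hy; auto. }
    { exists (Rabs (local_disc (Q0 n) 0)); exists 0; split; [lra|auto]. }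
    destruct (Rsup_lub EP) as [HP _].
    { exists 1; intros y Hy; auto. }
    { exists (Rabs (local_disc P 0)); exists 0; split; [lra|auto]. }
    apply Rle_lt_trans with (/ (2 * INR n)); [apply HQ; intros y Hy; auto|].
    apply Rlt_le_trans with (3 / (4 * INR n)).
    { rewrite Rinv_mult. unfold Rdiv. rewrite Rinv_mult.
      assert (0 < / INR n) by (apply Rinv_0_lt_compat; lra). lra. }
    apply Rle_trans with (Rabs (local_disc P a)); [apply Hint; lra|].
    apply HP. exists a; split; [lra|auto].
Qed.

Lemma grid_count n p P k : (1 <= n)%nat -> valid_exp p -> length P = n ->
  (forall Q : list R, length Q = n -> in_unit Q -> Lp_disc p P <= Lp_disc p Q) ->
  (k <= n)%nat -> count_in 0 (INR k / INR n) P = k.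
Proof.
  intros Hn Hp Hl Hmin Hk.
  assert (HN : 1 <= INR n) by (apply le_INR in Hn; simpl in Hn; lra).
  set (v := / INR n). assert (Hv : 0 < v) by (apply Rinv_0_lt_compat; lra).
  assert (HvN : INR n * v = 1) by (unfold v; field; lra).
  assert (Hdiv : forall x, x / INR n = x * v) by reflexivity.
  assert (H4 : 1 / (4 * INR n) = v / 4) by (unfold v; field; lra).
  assert (H34 : 3 / (4 * INR n) = 3 * v / 4) by (unfold v; field; lra).
  set (c := count_in 0 (INR k / INR n) P).
  destruct (Nat.eq_dec c k) as [E|E]; [exact E|exfalso].
  assert (Hcon : forall a b, 0 <= a < b /\ b <= 1 ->
    (forall t, a <= t <= b -> 3 / (4 * INR n) <= Rabs (local_disc P t) /\
                            Rabs (local_disc (Q0 n) t) <= 1 / (4 * INR n)) -> False).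
  { intros a b Hab Hint. pose proof (contra n p P a b Hn Hp Hl Hab Hint).
    pose proof (Hmin (Q0 n) (Q0_length n) (Q0_unit n)). lra. }
  assert (HQ : forall t, 0 <= t <= 1 -> Rabs (INR k / INR n - t) <= v / 4 ->
             Rabs (local_disc (Q0 n) t) <= 1 / (4 * INR n)).
  { intros t Ht Hd. rewrite H4. eapply Rle_trans; [apply (proj1 (Q0_disc n t k Hn Ht))|exact Hd]. }
  assert (Hkn : INR k <= INR n) by (apply le_INR; auto).
  pose proof (pos_INR k).
  destruct (Nat.lt_ge_cases k c) as [Hc|Hc].
  -
    assert (Hkn' : (k < n)%nat).
    { pose proof (count_le_length 0 (INR k / INR n) P). fold c in H0. lia. }
    assert (Hk1 : INR k + 1 <= INR n) by (rewrite <- S_INR; apply le_INR; lia).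
    apply (Hcon (INR k * v) (INR k * v + v / 4)).
    { split; [split; nra|]. nra. }
    intros t Ht. split.
    + unfold local_disc. rewrite Hl, H34, Hdiv.
      assert (Hct : (S k <= count_in 0 t P)%nat).
      { apply Nat.le_trans with c; [lia|]. apply count_mono. rewrite Hdiv; lra. }
      apply le_INR in Hct. rewrite S_INR in Hct.
      assert (INR (count_in 0 t P) * v >= (INR k + 1) * v) by (apply Rle_ge, Rmult_le_compat_r; lra).
      rewrite Rabs_right; lra.
    + apply HQ; [split; nra|]. rewrite Hdiv. unfold Rabs; destruct Rcase_abs; lra.
  - assert (Hc' : (c < k)%nat) by lia.
    assert (Hk1 : 1 <= INR k) by (apply (le_INR 1); lia).
    apply (Hcon (INR k * v - v / 4) (INR k * v)).
    { split; [split; nra|]. nra. }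
    intros t Ht. split.
    + unfold local_disc. rewrite Hl, H34, Hdiv.
      assert (Hct : (count_in 0 t P <= k - 1)%nat).
      { apply Nat.le_trans with c; [|lia]. apply count_mono. rewrite Hdiv; lra. }
      apply le_INR in Hct. rewrite minus_INR in Hct by lia. simpl in Hct.
      assert (INR (count_in 0 t P) * v <= (INR k - 1) * v) by (apply Rmult_le_compat_r; lra).
      rewrite Rabs_left; lra.
    + apply HQ; [split; nra|]. rewrite Hdiv. unfold Rabs; destruct Rcase_abs; lra.
Qed.

Theorem mainTheorem5 (n : nat) (p : option R) (P : list R) :
  valid_exp p ->
  length P = n ->
  in_unit P ->
  (forall Q : list R, length Q = n -> in_unit Q -> Lp_disc p P <= Lp_disc p Q) ->
  forall j : nat, (1 <= j <= n)%nat ->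
    count_in (INR (j - 1) / INR n) (INR j / INR n) P = 1%nat.
Proof.
  intros Hp Hl Hu Hmin j Hj.
  assert (Hn : (1 <= n)%nat) by lia.
  assert (HN : 1 <= INR n) by (apply le_INR in Hn; simpl in Hn; lra).
  pose proof (grid_count n p P j Hn Hp Hl Hmin ltac:(lia)) as H1.
  pose proof (grid_count n p P (j - 1) Hn Hp Hl Hmin ltac:(lia)) as H2.
  rewrite (count_split 0 (INR (j - 1) / INR n) (INR j / INR n)) in H1.
  - lia.
  - assert (0 < / INR n) by (apply Rinv_0_lt_compat; lra).
    assert (INR (j - 1) <= INR j) by (apply le_INR; lia).
    pose proof (pos_INR (j - 1)). unfold Rdiv. split; nra.
Qed.
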